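(* Let $f:\mathbb{R}^n\to\mathbb{R}$ be continuously differentiable with $L$-Lipschitz continuous gradient ($L>0$) and bounded below on $\mathbb{R}^n$ by $f_{\mathrm{low}}$. Run the direct-search algorithm described below with $\Omega=\mathbb{R}^n$, and suppose that at every iteration $k$ the polling set $\mathcal{D}_k$ is a $\Lambda$-positive spanning set for $B(x_k,\alpha_k)$ and satisfies $\|d\|\le d_{\max}\alpha_k$ for all $d\in\mathcal{D}_k$, for some constants $\Lambda>0$, $d_{\max}>0$. If $\nabla f(x_k)\neq 0$ and $\alpha_k<\frac{2\|\nabla f(x_k)\|}{(Ld_{\max}^2+\sigma)\Lambda}$, then iteration $k$ is successful.
   Context: $\|\cdot\|$ is the Euclidean norm, $B(y,r)=\{z:\|z-y\|\le r\}$. Given $x\in\mathbb{R}^n$, $\alpha>0$, $\Lambda>0$, a finite set $\{d_1,\ldots,d_p\}\subset\mathbb{R}^n$ is a $\Lambda$-positive spanning set for $B(x,\alpha)$ if for every $v\in B(0,\alpha)$ there exists $c\in\mathbb{R}^p$, $c\ge0$, with $v=\sum_i c_id_i$ and $\sum_i c_i\le\Lambda$. The algorithm (for minimizing $f$ over a set $\Omega$, here $\Omega=\mathbb{R}^n$): inputs $x_0\in\Omega$, $\alpha_{\max}>0$, $\alpha_0\in(0,\alpha_{\max}]$, $\sigma>0$, $0<\gamma_{\mathrm{dec}}<1<\gamma_{\mathrm{inc}}$. For $k=0,1,2,\ldots$: compute a finite polling set $\mathcal{D}_k\subset\mathbb{R}^n$; if there exists $d_k\in\mathcal{D}_k$ with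 $x_k+d_k\in\Omega$ and $f(x_k+d_k)<f(x_k)-\frac{\sigma}{2}\alpha_k^2$, set $x_{k+1}=x_k+d_k$ and $\alpha_{k+1}=\min\{\gamma_{\mathrm{inc}}\alpha_k,\alpha_{\max}\}$ (the iteration is called successful); otherwise set $x_{k+1}=x_k$, $\alpha_{k+1}=\gamma_{\mathrm{dec}}\alpha_k$ (unsuccessful). *)

(* Defs.v *)
From HB Require Import structures.
From mathcomp Require Import all_boot all_order all_algebra.
From mathcomp Require Import all_classical all_reals all_analysis.
Set Implicit Arguments. Unset Strict Implicit. Unset Printing Implicit Defensive.
Import Order.TTheory GRing.Theory Num.Theory.
Import numFieldNormedType.Exports.
Local Open Scope ring_scope.

Section Defs.
Variables (R : realType) (n : nat).
Notation vec := 'rV[R]_n.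

Definition dotv (u v : vec) : R := \sum_(i < n) u ord0 i * v ord0 i.
Definition enorm (v : vec) : R := Num.sqrt (dotv v v).

(* Lambda-positive spanning set for B(x, alpha) (x plays no role, as in the paper) *)
Definition pss_for (D : seq vec) (x : vec) (alpha Lambda : R) : Prop :=
  forall v : vec, enorm v <= alpha ->
    exists c : 'I_(size D) -> R,
      (forall i, 0 <= c i) /\
      v = \sum_(i < size D) c i *: D`_i /\
      \sum_(i < size D) c i <= Lambda.

Definition decrease (f : vec -> R) (sigma : R) (x d : vec) (alpha : R) : Prop :=
  f (x + d) < f x - sigma / 2 * alpha ^+ 2.

Definition successful (f : vec -> R) (sigma : R) (D : nat -> seq vec)
  (x : nat -> vec) (alpha : nat -> R) (k : nat) : Prop :=
  exists2 d, d \in D k & decrease f sigma (x k) d (alpha k).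

Definition direct_search_run (f : vec -> R) (x0 : vec)
  (alpha_max alpha0 sigma gdec ginc : R) (D : nat -> seq vec)
  (x : nat -> vec) (alpha : nat -> R) : Prop :=
  [/\ (0 < alpha_max) /\ (0 < alpha0 <= alpha_max) /\ (0 < sigma)
        /\ (0 < gdec < 1) /\ (1 < ginc),
      x 0%N = x0, alpha 0%N = alpha0 &
      forall k : nat,
        (successful f sigma D x alpha k ->
           (exists d, [/\ d \in D k, decrease f sigma (x k) d (alpha k)
                        & x k.+1 = x k + d]) /\
           alpha k.+1 = Num.min (ginc * alpha k) alpha_max) /\
        (~ successful f sigma D x alpha k ->
           x k.+1 = x k /\ alpha k.+1 = gdec * alpha k)].
End Defs.

(* Main.v *)
Require Import Defs.
From HB Require Import structures.
From mathcomp Require Import all_boot all_order all_algebra.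
From mathcomp Require Import all_classical all_reals all_analysis.
From mathcomp Require Import lra ring.
Import Order.TTheory GRing.Theory Num.Theory.
Import numFieldNormedType.Exports.
Local Open Scope ring_scope.

Section Dot.
Variables (R : realType) (n : nat).
Implicit Types (u v w : 'rV[R]_n) (a : R).

Lemma dotvC u v : dotv u v = dotv v u.
Proof. by apply: eq_bigr => i _; rewrite mulrC. Qed.
Lemma dotvDr u v w : dotv u (v + w) = dotv u v + dotv u w.
Proof. by rewrite /dotv -big_split; apply: eq_bigr => i _; rewrite !mxE mulrDr. Qed.
Lemma dotvZr a u v : dotv u (a *: v) = a * dotv u v.
Proof. by rewrite /dotv mulr_sumr; apply: eq_bigr => i _; rewrite !mxE mulrCA. Qed.
Lemma dotvNr u v : dotv u (- v) = - dotv u v.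
Proof. by rewrite -scaleN1r dotvZr mulN1r. Qed.
Lemma dotvBr u v w : dotv u (v - w) = dotv u v - dotv u w.
Proof. by rewrite dotvDr dotvNr. Qed.
Lemma dotv0r u : dotv u 0 = 0.
Proof. by rewrite /dotv big1 // => i _; rewrite mxE mulr0. Qed.
Lemma dotvDl u v w : dotv (v + w) u = dotv v u + dotv w u.
Proof. by rewrite !(dotvC _ u) dotvDr. Qed.
Lemma dotvZl a u v : dotv (a *: v) u = a * dotv v u.
Proof. by rewrite !(dotvC _ u) dotvZr. Qed.
Lemma dotvBl u v w : dotv (v - w) u = dotv v u - dotv w u.
Proof. by rewrite !(dotvC _ u) dotvBr. Qed.
Lemma dotv_ge0 u : 0 <= dotv u u.
Proof. by apply: sumr_ge0 => i _; rewrite -expr2 sqr_ge0. Qed.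
Lemma dotv_eq0 u : dotv u u = 0 -> u = 0.
Proof.
move/eqP; rewrite psumr_eq0; last by move=> i _; rewrite -expr2 sqr_ge0.
move/allP => H; apply/matrixP => i j; rewrite mxE (ord1 i).
have := H j (mem_index_enum _); rewrite /= mulf_eq0 orbb => /eqP //.
Qed.
Lemma enorm_ge0 u : 0 <= enorm u.
Proof. exact: sqrtr_ge0. Qed.
Lemma enorm_sq u : enorm u ^+ 2 = dotv u u.
Proof. by rewrite sqr_sqrtr // dotv_ge0. Qed.
Lemma enormZ a u : enorm (a *: u) = `|a| * enorm u.
Proof. by rewrite /enorm dotvZl dotvZr mulrA -expr2 sqrtrM ?sqr_ge0 // sqrtr_sqr. Qed.
Lemma dotv_sum m (c : 'I_m -> R) (F : 'I_m -> 'rV[R]_n) u :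
  dotv u (\sum_(i < m) c i *: F i) = \sum_(i < m) c i * dotv u (F i).
Proof.
rewrite (big_morph (dotv u) (dotvDr u) (dotv0r u)).
by apply: eq_bigr => i _; rewrite dotvZr.
Qed.
Lemma cauchy_schwarz u v : dotv u v <= enorm u * enorm v.
Proof.
set s := enorm u; set t := enorm v.
have s0 : 0 <= s by exact: enorm_ge0.
have t0 : 0 <= t by exact: enorm_ge0.
have H := dotv_ge0 (t *: u - s *: v).
rewrite dotvBl !dotvBr !dotvZl !dotvZr -!enorm_sq -/s -/t (dotvC v u) in H.
have [st0|] := ltP 0 (s * t).
  nra.
move=> st; have : s * t = 0 by apply/eqP; rewrite eq_le st mulr_ge0.
move/eqP; rewrite mulf_eq0 => /orP[] /eqP e.
  have : dotv u u = 0 by rewrite -enorm_sq -/s e expr2 mulr0.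
  by move/dotv_eq0 ->; rewrite dotvC dotv0r e mul0r.
have : dotv v v = 0 by rewrite -enorm_sq -/t e expr2 mulr0.
by move/dotv_eq0 ->; rewrite dotv0r e mulr0.
Qed.
End Dot.
Lemma line_derive (R : realType) (n : nat) (f : 'rV[R]_n -> R) (y d : 'rV[R]_n) (t : R) :
  differentiable f (y + t *: d) ->
  is_derive t 1 (fun s => f (y + s *: d)) ('d f (y + t *: d) d).
Proof.
move=> df.
have E : (fun s : R => s^-1 *: (((fun s => f (y + s *: d)) \o shift t) (s *: 1) - f (y + t *: d)))
   = (fun s => s^-1 *: ((f \o shift (y + t *: d)) (s *: d) - f (y + t *: d))).
  apply/funext => s /=.
  by rewrite -[s%:A]/(s * 1) mulr1 scalerDl addrCA.
apply: DeriveDef.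
  rewrite /derivable E; have := @diff_derivable _ _ _ _ _ d df; rewrite /derivable.
  exact.
by rewrite /derive E -/(derive f (y + t *: d) d) deriveE.
Qed.

Lemma descent (R : realType) (n : nat) (f : 'rV[R]_n -> R) (grad : 'rV[R]_n -> 'rV[R]_n) (L : R) (y d : 'rV[R]_n) :
  (forall y, differentiable f y) ->
  (forall y v, 'd f y v = dotv (grad y) v) ->
  0 <= L ->
  (forall y z, enorm (grad y - grad z) <= L * enorm (y - z)) ->
  f (y + d) <= f y + dotv (grad y) d + L / 2 * enorm d ^+ 2.
Proof.
move=> fd fg L0 Lip.
set a := dotv (grad y) d; set b := L / 2 * enorm d ^+ 2.
pose h := fun s : R => f (y + s *: d).
pose phi : R -> R := h - a \*: (@id R) - b \*: ((@id R) * (@id R)).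
have pd (t : R) : is_derive t (1 : R) phi (dotv (grad (y + t *: d)) d - a - b * (t + t)).
  apply: is_derive_eq.
    apply: is_deriveB; first apply: is_deriveB.
    exact: line_derive.
  rewrite fg /=; rewrite -[a%:A]/(a * 1) -[(id t)%:A]/(t * 1) -[b *: _]/(b * _).
  by rewrite !mulr1.
have cont := @derivable_within_continuous _ _ phi `[0, 1]%R _.
have cont2 : forall t : R, t \in `[0, 1]%R -> derivable phi t 1.
  move=> t _; exact: ex_derive.
have {cont cont2} cont := cont cont2.
have [c cab E] := MVT ltr01 (fun t _ => pd t) cont.
have c0 : 0 <= c by rewrite ltW // (itvP cab).
have E' : (f (y + 1 *: d) - a * 1 - b * (1*1)) - (f (y + 0 *: d) - a * 0 - b * (0 * 0))
   = (dotv (grad (y + c *: d)) d - a - b * (c + c)) * (1 - 0) := E.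
clear E; move: E'; rewrite scale0r scale1r addr0 !mulr0 !mulr1 !subr0 => E.
have key : dotv (grad (y + c *: d)) d - a <= L * c * enorm d ^+ 2.
  rewrite /a -dotvBl.
  apply: le_trans; first exact: cauchy_schwarz.
  have := Lip (y + c *: d) y; rewrite addrAC subrr add0r enormZ ger0_norm // => H.
  rewrite expr2 mulrA; apply: ler_wpM2r; first exact: enorm_ge0.
  by rewrite -mulrA.
have : f (y + d) - a - b - f y <= 0.
  rewrite E /b; rewrite /b in key.
  set N := enorm d ^+ 2 in key *.
  have : 0 <= N by rewrite /N sqr_ge0.
  nra.
lra.
Qed.
Theorem lemma4p2 (R : realType) (n : nat) (f : 'rV[R]_n -> R)
  (grad : 'rV[R]_n -> 'rV[R]_n) (L flow : R)
  (x0 : 'rV[R]_n) (alpha_max alpha0 sigma gdec ginc Lambda dmax : R)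
  (D : nat -> seq 'rV[R]_n) (x : nat -> 'rV[R]_n) (alpha : nat -> R) (k : nat) :
  (* f is C^1 with gradient grad *)
  (forall y, differentiable f y) ->
  (forall y v, 'd f y v = dotv (grad y) v) ->
  continuous grad ->
  (* L-Lipschitz gradient, L > 0 *)
  0 < L ->
  (forall y z, enorm (grad y - grad z) <= L * enorm (y - z)) ->
  (* bounded below by flow *)
  (forall y, flow <= f y) ->
  direct_search_run f x0 alpha_max alpha0 sigma gdec ginc D x alpha ->
  0 < Lambda -> 0 < dmax ->
  (forall j, pss_for (D j) (x j) (alpha j) Lambda) ->
  (forall j, forall d, d \in D j -> enorm d <= dmax * alpha j) ->
  grad (x k) != 0 ->
  alpha k < 2 * enorm (grad (x k)) / ((L * dmax ^+ 2 + sigma) * Lambda) ->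
  successful f sigma D x alpha k.
Proof.
move=> fd fg _ L0 Lip _ [[am0 [/andP[a00 a0m] [s0 [/andP[gd0 gd1] gi1]]]] _ ea0 step] Lam0 dm0 pss dmx gne0 hk.
have apos j : 0 < alpha j.
  elim: j => [|j IH]; first by rewrite ea0.
  have [sj|nsj] := pselect (successful f sigma D x alpha j).
    have [_ ->] := (step j).1 sj.
    by rewrite lt_min am0 andbT mulr_gt0 // (lt_trans ltr01 gi1).
  by have [_ ->] := (step j).2 nsj; rewrite mulr_gt0.
have [//|ns] := pselect (successful f sigma D x alpha k).
exfalso.
set g := grad (x k) in gne0 hk.
set a := alpha k in hk.
have a0 : 0 < a := apos k.
set K := (L * dmax ^+ 2 + sigma) / 2 * a ^+ 2.
have K0 : 0 <= K by rewrite /K !mulr_ge0 // ?addr_ge0 ?mulr_ge0 ?sqr_ge0 ?ltW.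
have dlow d : d \in D k -> - K <= dotv g d.
  move=> dD.
  have nd : ~ decrease f sigma (x k) d a by move=> dec; apply: ns; exists d.
  have : f (x k) - sigma / 2 * a ^+ 2 <= f (x k + d) by rewrite leNgt; apply/negP.
  have := @descent _ _ f grad L (x k) d fd fg (ltW L0) Lip.
  have := dmx k d dD; rewrite -/a => hd.
  have e0 := @enorm_ge0 _ _ d.
  have : enorm d ^+ 2 <= dmax ^+ 2 * a ^+ 2.
    by rewrite -exprMn !expr2; nra.
  rewrite /K -/g.
  nra.
have gpos : 0 < enorm g.
  rewrite /enorm sqrtr_gt0 lt_def dotv_ge0 andbT.
  by apply/eqP => /dotv_eq0 /eqP; apply/negP.
pose v := (- (a / enorm g)) *: g.
have nv : enorm v <= a.
  rewrite /v enormZ normrN ger0_norm; first by rewrite divfK ?gt_eqF.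
  by rewrite divr_ge0 // ltW.
have [c [c0 [ve cs]]] := pss k v nv.
have gv : dotv g v = - (a * enorm g).
  by rewrite /v dotvZr -enorm_sq expr2 mulrA !mulNr divfK ?gt_eqF.
have : - (K * Lambda) <= dotv g v.
  rewrite ve dotv_sum.
  apply: le_trans (_ : \sum_(i < size (D k)) c i * (- K) <= _).
    by rewrite -mulr_suml mulrN lerN2 mulrC; apply: ler_wpM2l.
  apply: ler_sum => i _; apply: ler_wpM2l => //; apply: dlow.
  exact: mem_nth.
rewrite gv.
move: hk; rewrite ltr_pdivlMr; last by rewrite mulr_gt0 // ltr_wpDr ?ltW // mulr_gt0 // exprn_gt0.
rewrite /K => hk h2.
have : a * enorm g <= (L * dmax ^+ 2 + sigma) / 2 * a ^+ 2 * Lambda by lra.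
move=> h3.
have : a * (a * ((L * dmax ^+ 2 + sigma) * Lambda)) < a * (2 * enorm g) by rewrite ltr_pM2l.
nra.
Qed.
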